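(* For $f : X \to \mathbb{R}$, the following are equivalent: Player II has a winning strategy in $\Gamma'(f)$; Player II has winning strategies in both $\Gamma(f)$ and $\Gamma(-f)$; $f$ is of Baire class 1.
   Context: Let $A$ be a non-empty countable set and $T$ a pruned tree on $A$ (a set of finite sequences of elements of $A$, closed under initial segments, in which every sequence has a proper extension in $T$). Let $X$ be the set of infinite branches of $T$, with the topology generated by the cylinder sets $O(s) = \{x \in X : s \text{ is an initial segment of } x\}$, $s \in T$. Baire class 1 means a pointwise limit of continuous functions. The game $\Gamma(g)$ for $g : X \to \mathbb{R}$: Player I and Player II alternate, Player I moving first; Player I plays $x_0, x_1, \dots \in A$ subject to $(x_0,\dots,x_t) \in T$ for all $t$, and after each move $x_t$ Player II plays a real $v_t$; Player II wins iff $g(x_0,x_1,\dots) = \limsup_t v_t$. The game $\Gamma'(f)$ is the same except that Player II's moves are pairs of reals $(v_t, w_t)$, and Player II wins iff $f(x_0,x_1,\dots) = \limsup_t v_t = \liminf_t w_t$; otherwise Player I wins. *)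

(* Defs.v *)
From Stdlib Require Import Reals List.
From Coquelicot Require Import Coquelicot.
Import ListNotations.
Open Scope R_scope.

Definition countable_type (A : Type) : Prop :=
  exists e : A -> nat, forall a b, e a = e b -> a = b.

Definition closed_under_initial_segments {A : Type} (T : list A -> Prop) : Prop :=
  forall s t : list A, T (s ++ t) -> T s.

Definition pruned {A : Type} (T : list A -> Prop) : Prop :=
  forall s, T s -> exists t, t <> [] /\ T (s ++ t).

Definition pruned_tree {A : Type} (T : list A -> Prop) : Prop :=
  closed_under_initial_segments T /\ pruned T.

Definition prefix {A : Type} (x : nat -> A) (n : nat) : list A :=
  map x (seq 0 n).

Definition branches {A : Type} (T : list A -> Prop) : Type :=
  { x : nat -> A | forall n, T (prefix x n) }.

Definition is_initial_segment {A : Type} (s : list A) (x : nat -> A) : Prop :=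
  prefix x (length s) = s.

Definition cylinder {A : Type} {T : list A -> Prop} (s : list A) : branches T -> Prop :=
  fun x => is_initial_segment s (proj1_sig x).

(* Open sets of the topology generated by the cylinders O(s), s in T:
   unions of cylinders. *)
Definition X_open {A : Type} {T : list A -> Prop} (U : branches T -> Prop) : Prop :=
  forall x, U x -> exists s, T s /\ cylinder s x /\ (forall y, cylinder s y -> U y).

Definition X_continuous {A : Type} {T : list A -> Prop} (g : branches T -> R) : Prop :=
  forall V : R -> Prop, open_set V -> X_open (fun x => V (g x)).

Definition baire_class_1 {A : Type} {T : list A -> Prop} (f : branches T -> R) : Prop :=
  exists g : nat -> branches T -> R,
    (forall n, X_continuous (g n)) /\
    (forall x, is_lim_seq (fun n => g n x) (f x)).

(* Strategies of Player II: after Player I has played (x_0,...,x_t), Player II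
   answers sigma [x_0;...;x_t].  (Player II's own earlier moves are determined by
   sigma and Player I's moves, so this is no loss of generality.) *)

Definition II_wins_Gamma {A : Type} {T : list A -> Prop} (g : branches T -> R)
  (sigma : list A -> R) : Prop :=
  forall x : branches T,
    is_LimSup_seq (fun t => sigma (prefix (proj1_sig x) (S t))) (Finite (g x)).

Definition II_has_ws_Gamma {A : Type} {T : list A -> Prop} (g : branches T -> R) : Prop :=
  exists sigma : list A -> R, II_wins_Gamma g sigma.

Definition II_wins_Gamma' {A : Type} {T : list A -> Prop} (f : branches T -> R)
  (sigma : list A -> R * R) : Prop :=
  forall x : branches T,
    is_LimSup_seq (fun t => fst (sigma (prefix (proj1_sig x) (S t)))) (Finite (f x)) /\
    is_LimInf_seq (fun t => snd (sigma (prefix (proj1_sig x) (S t)))) (Finite (f x)).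

Definition II_has_ws_Gamma' {A : Type} {T : list A -> Prop} (f : branches T -> R) : Prop :=
  exists sigma : list A -> R * R, II_wins_Gamma' f sigma.

(* Main.v *)
Require Import Defs.
From Stdlib Require Import Reals List Lra Lia ClassicalEpsilon Classical.
From Coquelicot Require Import Coquelicot.
Open Scope R_scope.

Lemma prefix_len {A} (x : nat -> A) k : length (prefix x k) = k.
Proof. unfold prefix. now rewrite length_map, length_seq. Qed.

Lemma prefix_pt {A} (x y : nat -> A) K i :
  prefix x K = prefix y K -> (i < K)%nat -> x i = y i.
Proof.
  intros H Hi. assert (E := f_equal (fun l => nth_error l i) H). simpl in E.
  unfold prefix in E. rewrite !nth_error_map, nth_error_seq in E.
  destruct (Nat.ltb_spec i K); [|lia]. simpl in E. now inversion E.
Qed.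

Lemma prefix_ext {A} (x y : nat -> A) k :
  (forall i, (i < k)%nat -> x i = y i) -> prefix x k = prefix y k.
Proof.
  intros H. unfold prefix. apply map_ext_in. intros a Ha.
  apply in_seq in Ha. apply H; lia.
Qed.

Lemma prefix_mono {A} (x y : nat -> A) k K :
  prefix x K = prefix y K -> (k <= K)%nat -> prefix x k = prefix y k.
Proof.
  intros H Hk. apply prefix_ext. intros i Hi. apply (prefix_pt _ _ K); auto; lia.
Qed.

Lemma part1 {A} {T : list A -> Prop} (f : branches T -> R) :
  II_has_ws_Gamma' f <-> (II_has_ws_Gamma f /\ II_has_ws_Gamma (fun x => - f x)).
Proof.
  split.
  - intros [sg Hs]. split.
    + exists (fun s => fst (sg s)). intros x. apply (Hs x).
    + exists (fun s => - snd (sg s)). intros x.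
      apply (is_LimSup_opp_LimInf_seq _ (Finite (f x))). apply (Hs x).
  - intros [[s1 H1] [s2 H2]]. exists (fun s => (s1 s, - s2 s)). intros x. split.
    + apply H1.
    + simpl. apply (is_LimSup_opp_LimInf_seq _ (Finite (f x))).
      eapply is_LimSup_seq_ext; [|apply (H2 x)].
      intros n. simpl. ring.
Qed.

Fixpoint Mx (u : nat -> R) (n d : nat) : R :=
  match d with O => u n | S d' => Rmax (Mx u n d') (u (n + S d')%nat) end.

Lemma Mx_ge u n d j : (j <= d)%nat -> u (n + j)%nat <= Mx u n d.
Proof.
  induction d; intros Hj; simpl.
  - replace j with 0%nat by lia. rewrite Nat.add_0_r. lra.
  - destruct (Nat.eq_dec j (S d)) as [->|].
    + apply Rmax_r.
    + eapply Rle_trans; [apply IHd; lia| apply Rmax_l].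
Qed.

Lemma Mx_le u n d c : (forall j, (j <= d)%nat -> u (n + j)%nat < c) -> Mx u n d < c.
Proof.
  induction d; intros H; simpl.
  - specialize (H 0%nat). rewrite Nat.add_0_r in H. apply H; lia.
  - apply Rmax_lub_lt; [apply IHd; intros; apply H; lia | apply H; lia].
Qed.

Lemma Mx_ext u u' n d : (forall j, (j <= d)%nat -> u (n + j)%nat = u' (n + j)%nat) ->
  Mx u n d = Mx u' n d.
Proof.
  induction d; intros H; simpl.
  - specialize (H 0%nat). rewrite Nat.add_0_r in H. apply H; lia.
  - rewrite IHd by (intros; apply H; lia). rewrite H by lia. reflexivity.
Qed.

Lemma least_exists (P : nat -> Prop) : (exists n, P n) ->
  {m | P m /\ forall k, P k -> (m <= k)%nat}.
Proof.
  intros H. apply constructive_indefinite_description.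
  destruct (Wf_nat.dec_inh_nat_subset_has_unique_least_element P (fun n => classic (P n)) H)
    as [m [[Hm Hl] _]]. exists m. split; auto.
Qed.

Lemma archi_eventually e : 0 < e -> exists N, forall n, (N <= n)%nat -> / INR (S n) < e.
Proof.
  intros He. destruct (archimed_cor1 e He) as [N [HN HN0]]. exists N. intros n Hn.
  eapply Rle_lt_trans; [|apply HN]. apply Rinv_le_contravar.
  apply lt_0_INR; lia. apply le_INR; lia.
Qed.

Lemma part2 {A} {T : list A -> Prop} (f : branches T -> R) :
  II_has_ws_Gamma f -> II_has_ws_Gamma (fun x => - f x) -> baire_class_1 f.
Proof.
  intros [s1 H1] [s2 H2].
  set (v := fun (x : branches T) t => s1 (prefix (proj1_sig x) (S t))).
  set (z := fun (x : branches T) t => s2 (prefix (proj1_sig x) (S t))).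
  set (P := fun n x d => 0 <= Mx (v x) n d + Mx (z x) n d + / INR (S n)).
  assert (Ex : forall n x, exists d, P n x d).
  { intros n x. apply NNPP. intros Hn.
    assert (He : 0 < / INR (S n) / 2).
    { apply Rdiv_lt_0_compat; [apply Rinv_0_lt_compat, lt_0_INR; lia | lra]. }
    set (e := mkposreal _ He).
    destruct (proj1 (H1 x e) n) as [k [Hk Hvk]].
    destruct (proj1 (H2 x e) n) as [k' [Hk' Hzk']].
    apply Hn. exists (Nat.max k k' - n)%nat. unfold P.
    pose proof (Mx_ge (v x) n (Nat.max k k' - n) (k - n) ltac:(lia)).
    pose proof (Mx_ge (z x) n (Nat.max k k' - n) (k' - n) ltac:(lia)).
    replace (n + (k - n))%nat with k in H by lia.
    replace (n + (k' - n))%nat with k' in H0 by lia.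
    unfold v, z in *. simpl in Hvk, Hzk', e. unfold e in *; simpl in *. lra. }
  set (tau := fun n x => proj1_sig (least_exists _ (Ex n x))).
  assert (Htau : forall n x, P n x (tau n x) /\ forall k, P n x k -> (tau n x <= k)%nat).
  { intros n x. unfold tau. destruct least_exists; simpl; auto. }
  exists (fun n x => Mx (v x) n (tau n x)). split.
  - intros n V _ x Hx. exists (prefix (proj1_sig x) (S (n + tau n x))).
    split; [apply (proj2_sig x)|]. split.
    + unfold cylinder, is_initial_segment. now rewrite prefix_len.
    + intros y Hy. unfold cylinder, is_initial_segment in Hy. rewrite prefix_len in Hy.
      assert (Ag : forall u w : nat -> A, prefix u (S (n + tau n x)) = prefix w (S (n + tau n x)) ->
        forall (s : list A -> R) j, (j <= tau n x)%nat ->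
        s (prefix u (S (n + j))) = s (prefix w (S (n + j)))).
      { intros u w Huw s j Hj. f_equal. eapply prefix_mono; [apply Huw| lia]. }
      assert (Ev : forall d, (d <= tau n x)%nat -> Mx (v y) n d = Mx (v x) n d).
      { intros d Hd. apply Mx_ext. intros j Hj. unfold v. apply (Ag _ _ Hy). lia. }
      assert (Ez : forall d, (d <= tau n x)%nat -> Mx (z y) n d = Mx (z x) n d).
      { intros d Hd. apply Mx_ext. intros j Hj. unfold z. apply (Ag _ _ Hy). lia. }
      assert (Py : P n y (tau n x)).
      { pose proof (proj1 (Htau n x)) as Q. unfold P in *. rewrite Ev, Ez; auto. }
      assert (L1 := proj2 (Htau n y) _ Py).
      assert (Px : P n x (tau n y)).
      { pose proof (proj1 (Htau n y)) as Q. unfold P in *. rewrite <- Ev, <- Ez; auto. }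
      assert (L2 := proj2 (Htau n x) _ Px).
      replace (tau n y) with (tau n x) by lia. rewrite Ev; auto.
  - intros x. apply is_lim_seq_spec. intros eps.
    assert (He2 : 0 < eps / 2) by (destruct eps; simpl; lra).
    set (e2 := mkposreal _ He2).
    destruct (proj2 (H1 x eps)) as [N1 HN1].
    destruct (proj2 (H2 x e2)) as [N2 HN2].
    destruct (archi_eventually _ He2) as [N3 HN3].
    exists (N1 + N2 + N3)%nat. intros n Hn.
    destruct (Htau n x) as [Pt _]. unfold P in Pt.
    assert (U : Mx (v x) n (tau n x) < f x + eps).
    { apply Mx_le. intros j _. apply HN1. lia. }
    assert (Z : Mx (z x) n (tau n x) < - f x + e2).
    { apply Mx_le. intros j _. apply HN2. lia. }
    specialize (HN3 n ltac:(lia)). change (pos e2) with (eps/2) in Z.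
    apply Rabs_def1; lra.
Qed.

Fixpoint nmaxf (P : nat -> Prop) (L : nat) : nat :=
  match L with
  | O => O
  | S L' => if excluded_middle_informative (P L) then L else nmaxf P L'
  end.

Lemma nmax_P P L : P O -> P (nmaxf P L).
Proof.
  intros H0. induction L; simpl; auto.
  destruct excluded_middle_informative; auto.
Qed.

Lemma nmax_ge P L n : (n <= L)%nat -> P n -> (n <= nmaxf P L)%nat.
Proof.
  induction L; intros Hn Pn; simpl.
  - lia.
  - destruct excluded_middle_informative as [H|H]; [lia|].
    destruct (Nat.eq_dec n (S L)) as [->|]; [contradiction|]. apply IHL; auto; lia.
Qed.

Definition pick {B : Type} (Q : B -> Prop) : option B :=
  match excluded_middle_informative (exists y, Q y) with
  | left H => Some (proj1_sig (constructive_indefinite_description _ H))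
  | right _ => None
  end.

Lemma pick_some {B} (Q : B -> Prop) y0 : Q y0 -> exists y, pick Q = Some y /\ Q y.
Proof.
  intros H. unfold pick. destruct excluded_middle_informative as [E|E].
  - eexists; split; [reflexivity|]. apply proj2_sig.
  - exfalso; apply E; eauto.
Qed.

Lemma open_ball c d : open_set (fun r => Rabs (r - c) < d).
Proof.
  intros r Hr. assert (Hd : 0 < d - Rabs (r - c)) by lra.
  exists (mkposreal _ Hd). intros y Hy. unfold disc in Hy; simpl in Hy.
  replace (y - c) with ((y - r) + (r - c)) by ring.
  eapply Rle_lt_trans; [apply Rabs_triang|]. lra.
Qed.

Lemma part3 {A} {T : list A -> Prop} (f : branches T -> R) :
  baire_class_1 f -> II_has_ws_Gamma f /\ II_has_ws_Gamma (fun x => - f x).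
Proof.
  intros [g [Hc Hl]].
  set (good := fun n s => forall k, (k < n)%nat -> forall y w : branches T,
     cylinder s y -> cylinder s w -> Rabs (g k y - g k w) <= / INR (S k)).
  set (vs := fun s => match pick (fun y : branches T => cylinder s y) with
     | Some y => g (pred (nmaxf (fun n => good n s) (length s))) y
     | None => 0 end).
  assert (Cyl : forall (x y : branches T) t, cylinder (prefix (proj1_sig x) t) y ->
            prefix (proj1_sig y) t = prefix (proj1_sig x) t).
  { intros x y t H. unfold cylinder, is_initial_segment in H. now rewrite prefix_len in H. }
  assert (Conv : forall x, is_lim_seq (fun t => vs (prefix (proj1_sig x) (S t))) (f x)).
  { intros x. apply is_lim_seq_spec. intros eps.
    assert (He2 : 0 < eps / 2) by (destruct eps; simpl; lra).
    destruct (proj2 (is_lim_seq_spec _ _) (Hl x) (mkposreal _ He2)) as [N0 HN0].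
    destruct (archi_eventually _ He2) as [N1 HN1].
    assert (Gd : forall K, exists L, forall t, (L <= t)%nat -> good K (prefix (proj1_sig x) (S t))).
    { induction K as [|K [L HL]].
      - exists O. intros t _ k Hk. lia.
      - assert (Hd : 0 < / INR (S K) / 2).
        { apply Rdiv_lt_0_compat; [apply Rinv_0_lt_compat, lt_0_INR; lia | lra]. }
        destruct (Hc K _ (open_ball (g K x) (/ INR (S K) / 2)) x) as [s [Ts [Hsx Hsy]]].
        { unfold Rminus. rewrite Rplus_opp_r, Rabs_R0. lra. }
        exists (Nat.max L (length s)). intros t Ht k Hk y w Hy Hw.
        destruct (Nat.eq_dec k K) as [->|Hne].
        + assert (CS : forall u : branches T, cylinder (prefix (proj1_sig x) (S t)) u -> cylinder s u).
          { intros u Hu. apply Cyl in Hu. unfold cylinder, is_initial_segment in *.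
            rewrite <- Hsx at 2. eapply prefix_mono; [apply Hu|lia]. }
          pose proof (Hsy y (CS y Hy)). pose proof (Hsy w (CS w Hw)). simpl in *.
          replace (g K y - g K w) with ((g K y - g K x) - (g K w - g K x)) by ring.
          eapply Rle_trans; [apply Rabs_triang|]. rewrite Rabs_Ropp. lra.
        + apply (HL t); auto; lia. }
    destruct (Gd (S (N0 + N1))) as [L HL].
    exists (Nat.max L (N0 + N1)). intros t Ht.
    specialize (HL t ltac:(lia)).
    set (s := prefix (proj1_sig x) (S t)) in *.
    assert (Hx : @cylinder _ T s x) by (unfold cylinder, is_initial_segment, s; now rewrite prefix_len).
    set (n := nmaxf (fun n => good n s) (length s)).
    assert (Hn : (S (N0 + N1) <= n)%nat).
    { apply nmax_ge; auto. unfold s; rewrite prefix_len; lia. }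
    assert (Gn : good n s) by (apply nmax_P; intros k Hk; lia).
    destruct (pick_some (fun y : branches T => @cylinder _ T s y) x Hx) as [y [Py Hy]].
    unfold vs. fold s. rewrite Py. fold n.
    pose proof (Gn (pred n) ltac:(lia) y x Hy Hx) as E1.
    pose proof (HN0 (pred n) ltac:(lia)) as E2.
    pose proof (HN1 (pred n) ltac:(lia)) as E3. simpl in E2.
    replace (g (pred n) y - f x) with ((g (pred n) y - g (pred n) x) + (g (pred n) x - f x)) by ring.
    eapply Rle_lt_trans; [apply Rabs_triang|]. lra. }
  split.
  - exists vs. intros x. apply is_lim_LimSup_seq. apply Conv.
  - exists (fun s => - vs s). intros x. apply is_lim_LimSup_seq.
    apply (is_lim_seq_opp _ (Finite (f x))). apply Conv.
Qed.

Theorem mainTheorem16 (A : Type) (T : list A -> Prop)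
  (hAne : inhabited A) (hAc : countable_type A) (hT : pruned_tree T)
  (f : branches T -> R) :
  (II_has_ws_Gamma' f <->
     (II_has_ws_Gamma f /\ II_has_ws_Gamma (fun x => - f x))) /\
  ((II_has_ws_Gamma f /\ II_has_ws_Gamma (fun x => - f x)) <-> baire_class_1 f).
Proof.
  split; [apply part1|]. split.
  - intros [H1 H2]. now apply part2.
  - apply part3.
Qed.
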